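(* Let $q$ be odd, $\varepsilon=\left(\frac{-1}{q}\right)$, $\nu=\left(\frac2q\right)$. For every $k\ge1$, $T_k(1)=1$, $T_k(-1)=(-1)^k$, and, viewing $T_k$ as a map ${\mathbb F}_q\to{\mathbb F}_q$: (i) $T_k(\mathcal A_1^{\nu,\nu})\subset\mathcal A_1^{\nu,\nu}\sqcup\{1,-\varepsilon\}$ and $T_k(\mathcal A_1^{-\nu,\nu})\subset\mathcal A_1^{-\nu,\nu}\sqcup\{1,\varepsilon\}$. (ii) If $k$ is odd then $T_k(\mathcal A_1^{\varepsilon\nu,-\nu})\subset\mathcal A_1^{\varepsilon\nu,-\nu}\sqcup\{-1\}$ and $T_k(\mathcal A_1^{-\varepsilon\nu,-\nu})\subset\mathcal A_1^{-\varepsilon\nu,-\nu}$. (iii) If $k$ is even then $T_k(\mathcal A_1^{-\nu,-\nu})\subset\mathcal A_1^{\nu,\nu}\sqcup\{1,-\varepsilon\}$ and $T_k(\mathcal A_1^{\nu,-\nu})\subset\mathcal A_1^{-\nu,\nu}\sqcup\{1,\varepsilon\}$. (iv) If $(q-1)/2$ divides $k$, then $T_k({\mathbb F}_q)\subset\mathcal A_1^{+-}\sqcup\mathcal A_1^{-+}\sqcup\{1,-1\}=\{a\in{\mathbb F}_q:a^2-1\text{ is a nonsquare}\}\sqcup\{1,-1\}$; if in addition $k$ is even, $T_k({\mathbb F}_q)\subset\mathcal A_1^{-\nu,\nu}\sqcup\{1,-1\}$. (v) If $(q+1)/2$ divides $k$, then $T_k({\mathbb F}_q)\subset\mathcal A_1^{++}\sqcup\mathcal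 A_1^{--}\sqcup\{1,-1\}=\{a\in{\mathbb F}_q:a^2-1\text{ is a square (possibly }0)\}$; if in addition $k$ is even, $T_k({\mathbb F}_q)\subset\mathcal A_1^{\nu,\nu}\sqcup\{1,-1\}$. (vi) If $\mathcal A_1^{\varepsilon_1,\varepsilon_2}$ is nonempty, then $T_k$ permutes $\mathcal A_1^{\varepsilon_1,\varepsilon_2}$ iff $\gcd(k,d^{\nu\varepsilon_1,\nu\varepsilon_2})=1$, where $d^{++}=(q-1)/2$, $d^{+-}=q+1$, $d^{-+}=(q+1)/2$, $d^{--}=q-1$.
   Context: Chebyshev polynomials of the first kind $T_k\in\mathbb Z[x]$: $T_0=1$, $T_1=x$, $T_{k+2}=2xT_{k+1}-T_k$. $\left(\frac{a}{q}\right)$ is the Legendre symbol on ${\mathbb F}_q$. For $\varepsilon_1,\varepsilon_2\in\{1,-1\}$ (written $+,-$) and $\lambda\in{\mathbb F}_q^\times$, $\mathcal A_\lambda^{\varepsilon_1,\varepsilon_2}=\{u\in{\mathbb F}_q:\left(\frac{u-\lambda}{q}\right)=\varepsilon_1,\ \left(\frac{u+\lambda}{q}\right)=\varepsilon_2\}$. *)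

(* Defs.v *)
From HB Require Import structures.
From mathcomp Require Import all_boot all_order all_algebra all_field.
Set Implicit Arguments. Unset Strict Implicit. Unset Printing Implicit Defensive.
Import Order.TTheory GRing.Theory Num.Theory.
Local Open Scope ring_scope.

(* Chebyshev polynomials of the first kind in Z[x]:
   T_0 = 1, T_1 = x, T_{k+2} = 2 x T_{k+1} - T_k.
   cheb_pair n = (T_n, T_{n+1}). *)
Fixpoint cheb_pair (n : nat) : {poly int} * {poly int} :=
  match n with
  | 0%N => (1, 'X)
  | n'.+1 => let: (a, b) := cheb_pair n' in (b, 'X * b *+ 2 - a)
  end.

Definition cheb (n : nat) : {poly int} := (cheb_pair n).1.

Definition chebF (F : finFieldType) (k : nat) (x : F) : F :=
  (map_poly (intr : int -> F) (cheb k)).[x].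

(* a is a square in F (0 counts as a square) *)
Definition is_square (F : finFieldType) (a : F) : bool := [exists b : F, b ^+ 2 == a].

Definition legendre (F : finFieldType) (a : F) : int :=
  if a == 0 then 0 else if is_square a then 1 else -1.

Definition Aset (F : finFieldType) (e1 e2 : int) (l : F) : {set F} :=
  [set u : F | (legendre (u - l) == e1) && (legendre (u + l) == e2)].

(* f maps A into A bijectively (A finite) *)
Definition permutes (F : finFieldType) (f : F -> F) (A : {set F}) : Prop :=
  {in A, forall x, f x \in A} /\ {in A &, injective f}.

Definition dsign (q : nat) (s1 s2 : int) : nat :=
  if s1 == 1 then (if s2 == 1 then (q.-1)./2 else q.+1)
  else (if s2 == 1 then (q.+1)./2 else q.-1).

(* Main.v *)
Require Import Defs.
From HB Require Import structures.
From mathcomp Require Import all_boot all_order all_algebra all_field all_fingroup all_solvable.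
From mathcomp Require Import zify ring.
Set Implicit Arguments. Unset Strict Implicit. Unset Printing Implicit Defensive.
Import Order.TTheory GRing.Theory Num.Theory FinRing.Theory.
Local Open Scope ring_scope.
Lemma gen_field (K : finFieldType) : exists g : K,
  (forall x : K, x != 0 -> exists i, x = g ^+ i) /\
  (forall i, (g ^+ i == 1) = (#|K|.-1 %| i)%N).
Proof.
have /cyclicP [x Hx] := field_unit_group_cyclic [set: {unit K}]%G.
exists (FinRing.uval x); split.
- move=> y y0.
  have : finField_unit y0 \in <[x]>%g by rewrite -Hx inE.
  case/cycleP => i Hi; exists i; by rewrite -val_unitX -Hi.
- move=> i; rewrite -val_unitX.
  have -> : (1 : K) = FinRing.uval (1%g : {unit K}) by rewrite val_unit1.
  rewrite val_eqE -order_dvdn /order -Hx card_finField_unit //.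
Qed.

Lemma card_gt1 (K : finFieldType) : (0 < #|K|.-1)%N.
Proof. by move: (finNzRing_gt1 K); case: #|K| => [|[|n]]. Qed.

Lemma pow_card1 (K : finFieldType) (x : K) : x != 0 -> x ^+ #|K|.-1 = 1.
Proof.
move=> x0; have := expf_card x.
rewrite -(ltn_predK (finNzRing_gt1 K)) exprS => H.
by apply: (mulfI x0); rewrite mulr1.
Qed.

Lemma key_pow (K : finFieldType) (d m : nat) (x : K) :
  (d * m = #|K|.-1)%N -> x != 0 -> x ^+ m = 1 -> exists y, x = y ^+ d.
Proof.
move=> hdm x0 hx; have [g [hg1 hg2]] := gen_field K.
move: hx; have [i ->] := hg1 x x0.
rewrite -exprM => /eqP; rewrite hg2 -hdm.
have m0 : (0 < m)%N by have := card_gt1 K; rewrite -hdm; case: m {hdm} => //; rewrite muln0.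
rewrite dvdn_pmul2r // => /dvdnP [j ->].
by exists (g ^+ j); rewrite -exprM mulnC.
Qed.

Lemma exists_ord (K : finFieldType) (r : nat) : (r %| #|K|.-1)%N -> (1 < r)%N ->
  exists w : K, w ^+ r = 1 /\ w != 1.
Proof.
move=> hr r1; have [g [hg1 hg2]] := gen_field K.
have N0 := card_gt1 K.
exists (g ^+ (#|K|.-1 %/ r)); split.
- by apply/eqP; rewrite -exprM hg2 divnK.
- rewrite hg2; apply/negP => /dvdn_leq.
  have : (0 < #|K|.-1 %/ r)%N by rewrite divn_gt0 ?(dvdn_leq N0 hr) //; lia.
  move=> h /(_ h); rewrite leqNgt ltn_Pdiv //.
Qed.

Lemma cheb_rec n : cheb n.+2 = 'X * cheb n.+1 *+ 2 - cheb n.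
Proof. by rewrite /cheb /=; case: (cheb_pair n). Qed.

Lemma cheb0 : cheb 0 = 1. Proof. by []. Qed.
Lemma cheb1 : cheb 1 = 'X. Proof. by []. Qed.

Lemma chebF_rec (K : finFieldType) k (x : K) :
  chebF k.+2 x = x * chebF k.+1 x *+ 2 - chebF k x.
Proof. by rewrite /chebF cheb_rec rmorphB rmorphMn rmorphM /= map_polyX !hornerE mulr2n. Qed.

Lemma chebF0 (K : finFieldType) (x : K) : chebF 0 x = 1.
Proof. by rewrite /chebF cheb0 rmorph1 hornerE. Qed.

Lemma chebF1 (K : finFieldType) (x : K) : chebF 1 x = x.
Proof. by rewrite /chebF cheb1 map_polyX hornerE. Qed.

Definition chebP (n : nat) : Prop := (cheb n).[1] = 1 /\ (cheb n).[-1] = (-1) ^+ n.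

Lemma cheb_pm k : (cheb k).[1] = 1 /\ (cheb k).[-1] = (-1) ^+ k.
Proof.
suff H : forall n, chebP n /\ chebP n.+1 by case: (H k) => [[]].
elim => [|n [[h1 h2] [h3 h4]]].
  by rewrite /chebP cheb0 cheb1 !hornerE expr1.
split=> //; rewrite /chebP cheb_rec !hornerE h1 h2 h3 h4; split; first by [].
by rewrite !exprS; ring.
Qed.

Lemma ring_e1 (E : fieldType) (z w : E) n :
  (z + w) * (z ^+ n.+1 + w ^+ n.+1) = z ^+ n.+2 + w ^+ n.+2 + z * w * (z ^+ n + w ^+ n).
Proof. rewrite !exprS. ring. Qed.

Lemma ring_e2 (F E : fieldType) (f : {rmorphism F -> E}) (t a b : F) :
  f (t * a *+ 2 - b) *+ 2 = (f t *+ 2) * (f a *+ 2) - f b *+ 2.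
Proof. rewrite rmorphB rmorphMn rmorphM. ring. Qed.

Lemma alg1 (K : fieldType) (t c : K) : c != 0 -> t *+ 2 = c + c^-1 -> (t - 1) * (c *+ 2) = (c - 1) ^+ 2.
Proof. move=> c0 ht; transitivity (c * (t *+ 2) - c *+ 2); first by ring.
rewrite ht mulrDr mulfV //; ring. Qed.
Lemma alg2 (K : fieldType) (t c : K) : c != 0 -> t *+ 2 = c + c^-1 -> (t + 1) * (c *+ 2) = (c + 1) ^+ 2.
Proof. move=> c0 ht; transitivity (c * (t *+ 2) + c *+ 2); first by ring.
rewrite ht mulrDr mulfV //; ring. Qed.
Lemma alg3 (K : comNzRingType) (z w y : K) : y *+ 2 = z + w -> (z - y) ^+ 2 = y ^+ 2 - z * w.
Proof. move=> hy; transitivity (z ^+ 2 - z * (y *+ 2) + y ^+ 2); first by ring.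
rewrite hy; ring. Qed.
Lemma alg4 (K : fieldType) (t v : K) : (2:K) != 0 -> v ^+ 2 = (t + 1) *+ 2 -> (v / 2) ^+ 2 - 1 = (t - 1) / 2.
Proof. move=> h2 hv; rewrite expr_div_n hv; field; rewrite h2 /=; have := mulf_neq0 h2 h2; by rewrite -natrM. Qed.
Lemma alg5 (K : comNzRingType) (y y' : K) : (y + y') ^+ 2 - (y * y') *+ 2 = y ^+ 2 + y' ^+ 2.
Proof. ring. Qed.

Definition hh (F : finFieldType) := (#|F|./2)%N.

Section Main.
Variables (F E : finFieldType) (f : {rmorphism F -> E}).
Hypothesis hodd : odd #|F|.
Hypothesis hcardE : #|E| = (#|F| ^ 2)%N.
Local Notation q := #|F|.
Local Notation h := (hh F).

Lemma qE : q = (h.*2).+1.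
Proof. by have := odd_double_half q; rewrite hodd add1n /hh. Qed.

Lemma h_gt0 : (0 < h)%N.
Proof. have := finNzRing_gt1 F; rewrite qE; case: (h) => //. Qed.

Lemma qm1 : q.-1 = h.*2. Proof. by rewrite qE. Qed.

Lemma NE : #|E|.-1 = (h.*2 * (h.+1).*2)%N.
Proof. rewrite hcardE qE; set n := h; rewrite expnS expn1; lia. Qed.

Lemma two_neq0 : (2 : F) != 0.
Proof.
have [p pp hp] := finPcharP F.
have pn : p.-nat q by move: (abelem_pgroup (fin_ring_pchar_abelem hp)); rewrite /pgroup cardsT.
apply/negP => /eqP h2.
have h2c : 2%N \in [pchar F] by rewrite inE /= h2 eqxx.
have := pcharf_eq hp; move=> /(_ 2%N); rewrite h2c => /esym; rewrite inE => /eqP p2.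
have [k hk] := p_natP pn.
move: hodd; rewrite hk -p2; case: k hk => [|k] hk; last by rewrite expnS oddM.
by move: (finNzRing_gt1 F); rewrite hk.
Qed.

Lemma qnatE : ([pchar E]).-nat q.
Proof.
have [p pp hp] := finPcharP F.
have pn : p.-nat q by move: (abelem_pgroup (fin_ring_pchar_abelem hp)); rewrite /pgroup cardsT.
have hpE := rmorph_pchar f hp.
by rewrite (eq_pnat _ (pcharf_eq hpE)).
Qed.

Lemma frobD (x y : E) : (x + y) ^+ q = x ^+ q + y ^+ q.
Proof. exact: exprDn_pchar qnatE. Qed.

Lemma frobN (x : E) : (- x) ^+ q = - x ^+ q.
Proof. by rewrite exprNn -signr_odd hodd expr1 mulN1r. Qed.

Lemma frobB (x y : E) : (x - y) ^+ q = x ^+ q - y ^+ q.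
Proof. by rewrite frobD frobN. Qed.

Lemma frobf (a : F) : (f a) ^+ q = f a.
Proof. by rewrite -rmorphXn expf_card. Qed.

Lemma frob2 (x : E) : (x ^+ q) ^+ q = x.
Proof.
rewrite -exprM; have -> : (q * q)%N = #|E| by rewrite hcardE expnS expn1.
by rewrite expf_card.
Qed.

Lemma chi_card (x : F) : x != 0 -> x ^+ h.*2 = 1.
Proof. by move=> x0; rewrite -qm1 pow_card1. Qed.

Lemma chi_pm (x : F) : x != 0 -> x ^+ h = 1 \/ x ^+ h = -1.
Proof.
move=> x0; have := chi_card x0; rewrite -muln2 exprM => /eqP.
by rewrite sqrf_eq1 => /orP [/eqP -> | /eqP ->]; [left|right].
Qed.

Lemma chi_sqE (x : F) : x != 0 -> is_square x = (x ^+ h == 1).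
Proof.
move=> x0; apply/existsP/eqP => [[b /eqP hb]|hx].
  rewrite -hb -exprM mul2n chi_card //; apply: contra x0; rewrite -hb => /eqP ->.
  by rewrite expr0n.
have [y hy] := key_pow (d:=2) (m:=h) (esym (etrans qm1 (esym (mul2n h)))) x0 hx.
by exists y; rewrite hy.
Qed.

Lemma exists_nsq : exists d : F, ~~ is_square d.
Proof.
have [g [_ hg2]] := gen_field F.
have g0 : g != 0.
  apply/negP => /eqP g0; move: (hg2 q.-1); rewrite dvdnn g0 expr0n qm1.
  by case: (h) h_gt0 => // n _ /=; rewrite eq_sym oner_eq0.
exists g; rewrite chi_sqE // hg2 qm1 -muln2.
apply/negP => hd; have := dvdn_leq h_gt0 hd; have := h_gt0; clear -hd; lia.
Qed.


Lemma chi0 : (0 : F) ^+ h = 0.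
Proof. by rewrite expr0n; case: (h) h_gt0. Qed.

Lemma chi_sq (x : F) : x != 0 -> (x ^+ 2) ^+ h = 1.
Proof. by move=> x0; rewrite -exprM mul2n chi_card. Qed.

Lemma legendreE (x : F) : ((legendre x)%:~R : F) = x ^+ h.
Proof.
rewrite /legendre; have [->|x0] := eqVneq x 0; first by rewrite chi0.
rewrite (chi_sqE x0); case: (chi_pm x0) => ->; rewrite ?eqxx //.
have -> : ((-1 : F) == 1) = false.
  apply/negP => /eqP h1; move: two_neq0; rewrite -[2]/(1 + 1) -{1}h1 addNr eqxx //.
by [].
Qed.

Lemma m1_neq1 : (-1 : F) != 1.
Proof. apply/negP => /eqP h1; move: two_neq0; rewrite -[2]/(1 + 1) -{1}h1 addNr eqxx //. Qed.

Lemma legendre_in (x : F) : legendre x \in [:: -1; 0; 1].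
Proof. by rewrite /legendre; case: ifP => //; case: ifP. Qed.

Lemma intr_inj3 (e1 e2 : int) : e1 \in [:: -1; 0; 1] -> e2 \in [:: -1; 0; 1] ->
  (e1%:~R : F) = e2%:~R -> e1 = e2.
Proof.
have o0 : (1 : F) != 0 := oner_neq0 F.
have m0 : (-1 : F) != 0 by rewrite oppr_eq0.
have m1 := m1_neq1.
rewrite !inE => /or3P [] /eqP -> /or3P [] /eqP -> //= /eqP; rewrite ?rmorphN ?rmorph1 ?rmorph0 //;
  rewrite ?(eq_sym 0) ?(eq_sym 1 (-1)) ?(negbTE o0) ?(negbTE m0) ?(negbTE m1) //.
Qed.

Definition AF (a b : F) : {set F} := [set u | ((u - 1) ^+ h == a) && ((u + 1) ^+ h == b)].

Lemma AsetE (e1 e2 : int) : e1 \in [:: -1; 0; 1] -> e2 \in [:: -1; 0; 1] ->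
  Aset e1 e2 (1 : F) = AF e1%:~R e2%:~R.
Proof.
move=> he1 he2; apply/setP => u; rewrite !inE -!legendreE.
congr andb; apply/eqP/eqP => [-> // | /intr_inj3 ->] //; exact: legendre_in.
Qed.

Lemma f2 : (2 : E) != 0.
Proof. by rewrite -(rmorph_nat f) fmorph_eq0 two_neq0. Qed.

Lemma fm1_neq1 : (-1 : E) != 1.
Proof. by rewrite -(rmorph1 f) -rmorphN (inj_eq (fmorph_inj f)) m1_neq1. Qed.

Lemma fix_in (x : E) : x ^+ q = x -> exists a, x = f a.
Proof.
move=> hx; case: (boolP [exists a, x == f a]) => [/existsP [a /eqP ->]|hn]; first by exists a.
exfalso; move/existsPn: hn => hn.
pose P : {poly E} := 'X^q - 'X.
have hs : size P = q.+1.
  by rewrite size_polyDl ?size_polyXn // size_polyN size_polyX ltnS (finNzRing_gt1 F).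
have Pn0 : P != 0 by rewrite -size_poly_eq0 hs.
have := @max_poly_roots _ P (x :: map f (enum F)) Pn0.
rewrite hs /= size_map -cardE ltnn => H; suff : false by []; apply: H.
  apply/andP; split; first by rewrite /root /P !hornerE hx subrr.
  apply/allP => y /mapP [a _ ->]; by rewrite /root /P !hornerE frobf subrr.
rewrite (map_inj_uniq (fmorph_inj f)) enum_uniq andbT.
by apply/mapP => [[a _ ha]]; move: (hn a); rewrite ha eqxx.
Qed.

Lemma sq_in (a : F) : exists r : E, r ^+ 2 = f a.
Proof.
have [->|a0] := eqVneq a 0; first by exists 0; rewrite rmorph0 expr0n.
have := @key_pow E 2 (h * h.+1).*2 (f a); rewrite NE.
have -> : (2 * (h * h.+1).*2 = h.*2 * h.+1.*2)%N by lia.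
move=> /(_ erefl); rewrite fmorph_eq0 => /(_ a0) [].
  by rewrite -rmorphXn doubleMl exprM chi_card // expr1n rmorph1.
by move=> y ->; exists y.
Qed.

Lemma sqrt_sq (r c : E) : r ^+ 2 = c ^+ 2 -> r = c \/ r = - c.
Proof. by move/eqP; rewrite eqf_sqr => /orP [/eqP|/eqP]; [left|right]. Qed.

Lemma frob_nsq (r : E) (D : F) : r ^+ 2 = f D -> D ^+ h = -1 -> r ^+ q = - r.
Proof.
move=> hr hD; rewrite qE exprS -mul2n exprM hr -rmorphXn hD rmorphN rmorph1.
by rewrite mulrN1.
Qed.

Definition rep (t : F) (z w : E) := z * w = 1 /\ f t *+ 2 = z + w.

Lemma lift (t : F) : exists z w, rep t z w /\
  (is_square (t ^+ 2 - 1) -> z ^+ q.-1 = 1) /\ (~~ is_square (t ^+ 2 - 1) -> z ^+ q.+1 = 1).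
Proof.
have [r hr] := sq_in (t ^+ 2 - 1).
have hzw : (f t + r) * (f t - r) = 1.
  by rewrite mulrC -subr_sqr hr rmorphB rmorphXn rmorph1 opprB addrC subrK.
have z0 : f t + r != 0.
  by apply/negP => /eqP hz; move: hzw; rewrite hz mul0r => /eqP; rewrite eq_sym oner_eq0.
exists (f t + r), (f t - r); split; [split|split].
- exact: hzw.
- by rewrite addrACA subrr addr0 mulr2n.
- move=> /existsP [c /eqP hc].
  move: hr z0; rewrite -hc rmorphXn => /sqrt_sq [] -> z0.
  + rewrite -rmorphD in z0 *; rewrite -rmorphXn pow_card1 ?rmorph1 //.
    by rewrite fmorph_eq0 in z0.
  + rewrite -rmorphN -rmorphD in z0 *; rewrite -rmorphXn pow_card1 ?rmorph1 //.
    by rewrite fmorph_eq0 in z0.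
- move=> hn.
  have hD : t ^+ 2 - 1 != 0 by apply: contra hn => /eqP ->; apply/existsP; exists 0; rewrite expr0n.
  have hDh : (t ^+ 2 - 1) ^+ h = -1.
    by case: (chi_pm hD) => // h1; move: hn; rewrite chi_sqE // h1 eqxx.
  have hrq := frob_nsq hr hDh.
  by rewrite exprSr frobD frobf hrq mulrC.
Qed.

Lemma rep_cheb k t z w : rep t z w -> rep (chebF k t) (z ^+ k) (w ^+ k).
Proof.
case=> hzw hs.
suff H : forall n, rep (chebF n t) (z ^+ n) (w ^+ n) /\ rep (chebF n.+1 t) (z ^+ n.+1) (w ^+ n.+1).
  by case: (H k).
elim => [|n [hr1 hr2]].
  rewrite chebF0 chebF1 !expr0 !expr1; split; last by split.
  by split; rewrite ?mulr1 // rmorph1 mulr2n.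
split; first exact: hr2.
case: hr1 => _ h1; case: hr2 => _ h2.
split; first by rewrite -exprMn hzw expr1n.
have e : (z + w) * (z ^+ n.+1 + w ^+ n.+1) = z ^+ n.+2 + w ^+ n.+2 + z * w * (z ^+ n + w ^+ n).
  exact: ring_e1.
rewrite chebF_rec.
transitivity ((f t *+ 2) * (f (chebF n.+1 t) *+ 2) - f (chebF n t) *+ 2).
  exact: ring_e2.
by rewrite hs h1 h2 e hzw mul1r addrK.
Qed.

Lemma rep_ne0 t z w : rep t z w -> z != 0.
Proof. by case=> hzw _; apply/negP => /eqP hz; move: hzw; rewrite hz mul0r => /eqP; rewrite eq_sym oner_eq0. Qed.

Lemma rep_sym t z w : rep t z w -> rep t w z.
Proof. by case=> h1 h2; split; rewrite 1?mulrC 1?addrC. Qed.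

Lemma mul2I (x y : F) : x *+ 2 = y *+ 2 -> x = y.
Proof. by rewrite -[x *+ 2]mulr_natr -[y *+ 2]mulr_natr => /(mulIf two_neq0). Qed.

Lemma mul2IE (x y : E) : x *+ 2 = y *+ 2 -> x = y.
Proof. by rewrite -[x *+ 2]mulr_natr -[y *+ 2]mulr_natr => /(mulIf f2). Qed.

Lemma rep_pm1 t z w : rep t z w -> z ^+ 2 = 1 -> (z = 1 /\ w = 1 /\ t = 1) \/ (z = -1 /\ w = -1 /\ t = -1).
Proof.
case=> hzw hs /eqP; rewrite sqrf_eq1 => /orP [] /eqP hz; move: hzw hs; rewrite hz.
  rewrite mul1r => -> hs; left; do 2!split => //.
  by apply: mul2I; apply: (fmorph_inj f); rewrite !rmorphMn rmorph1 hs mulr2n.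
move=> hw; have hw' : w = -1.
  by rewrite -[w]opprK -hw mulN1r.
rewrite hw' => hs; right; do 2!split => //.
by apply: mul2I; apply: (fmorph_inj f); rewrite !rmorphMn rmorphN rmorph1 hs mulr2n.
Qed.

Lemma root2 (z w x y : E) : z * w = 1 -> x * y = 1 -> z + w = x + y -> x = z \/ x = w.
Proof.
move=> h1 h2 h3.
have : (x - z) * (x - w) = 0.
  have -> : (x - z) * (x - w) = x * x - (z + w) * x + z * w by ring.
  by rewrite h3 h1 -h2; ring.
by move/eqP; rewrite mulf_eq0 !subr_eq0 => /orP [] /eqP; [left|right].
Qed.

Lemma inv_uniq (z w w' : E) : z * w = 1 -> z * w' = 1 -> w = w'.
Proof.
move=> h1 h2; have z0 : z != 0 by apply/negP => /eqP hz; move: h1; rewrite hz mul0r => /eqP; rewrite eq_sym oner_eq0.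
by apply: (mulfI z0); rewrite h1 h2.
Qed.

Definition sg (a : F) := (a == 1) || (a == -1).
Local Notation N := ((2 : F) ^+ h).
Local Notation Eps := ((-1 : F) ^+ h).

Lemma sg_sq a : sg a -> a * a = 1.
Proof. by case/orP => /eqP ->; rewrite ?mulr1 ?mulrNN ?mulr1. Qed.

Lemma sgN a : sg a -> sg (- a).
Proof. by case/orP => /eqP ->; rewrite /sg ?opprK eqxx ?orbT. Qed.

Lemma sg_ne0 a : sg a -> a != 0.
Proof. by case/orP => /eqP ->; rewrite ?oppr_eq0 oner_eq0. Qed.

Lemma sgM a b : sg a -> sg b -> sg (a * b).
Proof. by case/orP => /eqP -> /orP [] /eqP ->; rewrite /sg ?mul1r ?mulr1 ?mulrNN ?mulr1 ?eqxx ?orbT. Qed.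

Lemma sg_neq a b : sg a -> sg b -> a != b -> a = - b.
Proof.
case/orP => /eqP -> /orP [] /eqP ->; rewrite ?eqxx ?opprK //.
Qed.

Lemma sg_solve x a : sg a -> x * a = 1 -> x = a.
Proof. by move=> ha hx; rewrite -[x]mulr1 -(sg_sq ha) mulrA hx mul1r. Qed.

Lemma sg_chi x : x != 0 -> sg (x ^+ h).
Proof. by move=> x0; case: (chi_pm x0) => ->; rewrite /sg eqxx ?orbT. Qed.

Lemma N_sg : sg N. Proof. exact: sg_chi two_neq0. Qed.

Lemma Eps_sg : sg Eps.
Proof. by rewrite -signr_odd; case: odd; rewrite /sg eqxx ?orbT. Qed.

Lemma NN : N * N = 1. Proof. exact: sg_sq N_sg. Qed.

Definition mm (a b : F) := if a == b then h else h.+1.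
Definition sig (a b : F) := if a == b then a * N else b * N.
Definition inS (a b : F) (z : E) := z ^+ mm a b = f (sig a b).

Lemma sig_sg a b : sg a -> sg b -> sg (sig a b).
Proof. by move=> ha hb; rewrite /sig; case: ifP => _; apply: sgM => //; exact: N_sg. Qed.

Lemma fsg_sq a : sg a -> f a ^+ 2 = 1.
Proof. by move=> ha; rewrite -rmorphXn expr2 sg_sq // rmorph1. Qed.

Lemma qp1 : q.+1 = (h.+1).*2.
Proof. by rewrite qE. Qed.

Lemma inS_card a b z : sg a -> sg b -> inS a b z ->
  (if a == b then z ^+ q.-1 else z ^+ q.+1) = 1.
Proof.
move=> ha hb; rewrite /inS /mm; move: (sig_sg ha hb); rewrite /sig.
by case: ifP => _ hs hz; rewrite ?qm1 ?qp1 -muln2 exprM hz fsg_sq.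
Qed.

Lemma zq_fix_sq t z w : rep t z w -> z ^+ q = z -> z ^+ 2 = 1 \/ exists c, z = f c.
Proof. by move=> _ /fix_in; right. Qed.

Lemma nsq_of t z w : rep t z w -> z ^+ q = w -> z ^+ 2 != 1 -> (t ^+ 2 - 1) ^+ h = -1.
Proof.
move=> hr hzq hz2; case: (hr) => hzw hs.
have hr2 : (z - f t) ^+ 2 = f (t ^+ 2 - 1).
  by rewrite (alg3 (w:=w)) // hzw rmorphB rmorphXn rmorph1.
have hsq : ~~ is_square (t ^+ 2 - 1).
  apply/negP => /existsP [c /eqP hc]; move: hr2; rewrite -hc rmorphXn => /sqrt_sq hzc.
  have : exists c', z = f c'.
    case: hzc => hzc; [exists (t + c)|exists (t - c)]; rewrite rmorphD ?rmorphN -hzc; ring.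
  case=> c' hc'; move: hzq; rewrite hc' frobf -hc' => hzw'.
  by move: hz2; rewrite expr2 {2}hzw' hzw eqxx.
have hD : t ^+ 2 - 1 != 0 by apply: contra hsq => /eqP ->; apply/existsP; exists 0; rewrite expr0n.
by case: (chi_pm hD) => // h1; move: hsq; rewrite chi_sqE // h1 eqxx.
Qed.

Lemma chiM (x y : F) : (x * y) ^+ h = x ^+ h * y ^+ h.
Proof. exact: exprMn. Qed.

Lemma class_eq a t z w : sg a -> rep t z w -> z ^+ 2 != 1 -> z ^+ h = f (a * N) ->
  (t - 1) ^+ h = a /\ (t + 1) ^+ h = a.
Proof.
move=> ha hr hz2 hz; case: (hr) => hzw hs.
have z0 := rep_ne0 hr.
have hzq : z ^+ q = z.
  by rewrite qE exprS -muln2 exprM hz fsg_sq ?mulr1 //; apply: sgM => //; exact: N_sg.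
have [c hc] := fix_in hzq.
have c0 : c != 0 by move: z0; rewrite hc fmorph_eq0.
have hw : w = f c^-1 by apply: (inv_uniq hzw); rewrite hc -rmorphM mulfV // rmorph1.
have ht : t *+ 2 = c + c^-1.
  by apply: (fmorph_inj f); rewrite rmorphMn rmorphD hs hc hw.
have hch : c ^+ h = a * N by apply: (fmorph_inj f); rewrite rmorphXn -hc hz.
have c2 : c ^+ 2 != 1 by move: hz2; rewrite hc -rmorphXn -(rmorph1 f) (inj_eq (fmorph_inj f)).
have cm1 : c - 1 != 0.
  by apply: contra c2; rewrite subr_eq0 => /eqP ->; rewrite expr1n.
have cp1 : c + 1 != 0.
  by apply: contra c2; rewrite addr_eq0 => /eqP ->; rewrite sqrrN expr1n.
have h2c : (c *+ 2) ^+ h = a.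
  by rewrite -mulr_natr chiM hch -mulrA NN mulr1.
split; apply: sg_solve => //.
  by rewrite -h2c -chiM alg1 // chi_sq.
by rewrite -h2c -chiM alg2 // chi_sq.
Qed.

Lemma N_ne0 : N != 0. Proof. exact: sg_ne0 N_sg. Qed.

Lemma class_neq b t z w : sg b -> rep t z w -> z ^+ 2 != 1 -> z ^+ h.+1 = f (b * N) ->
  (t - 1) ^+ h = - b /\ (t + 1) ^+ h = b.
Proof.
move=> hb hr hz2 hz; case: (hr) => hzw hs.
have z0 := rep_ne0 hr.
have hbN : sg (b * N) by apply: sgM => //; exact: N_sg.
have hzq1 : z ^+ q.+1 = 1 by rewrite qp1 -muln2 exprM hz fsg_sq.
have hzq : z ^+ q = w by apply: (mulIf z0); rewrite -exprSr hzq1 mulrC hzw.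
have hD := nsq_of hr hzq hz2.
have tp1 : t + 1 != 0.
  apply/negP => /eqP ht; move: hD; have -> : t = -1 by rewrite -[t]addr0 -(subrr 1) addrA ht add0r.
  by rewrite sqrrN expr1n subrr chi0 => /eqP; rewrite eq_sym oppr_eq0 oner_eq0.
have hprod : (t - 1) ^+ h * (t + 1) ^+ h = -1.
  by rewrite -chiM -[_ * _]subr_sqr expr1n.
suff key : (t + 1) ^+ h = b.
  split => //; have : (- (t - 1) ^+ h) * b = 1 by rewrite mulNr -key hprod opprK.
  by move/(sg_solve hb) => <-; rewrite opprK.
have t2 : (t + 1) *+ 2 != 0 by rewrite -[(t + 1) *+ 2]mulr_natr mulf_neq0 // two_neq0.
have chi2 : ((t + 1) *+ 2) ^+ h = (t + 1) ^+ h * N by rewrite -[(t + 1) *+ 2]mulr_natr chiM.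
case: (eqVneq (b * N) 1) => hbN1.
- have hbe : b = N := sg_solve N_sg hbN1.
  have hdm : ((h.*2).*2 * h.+1 = #|E|.-1)%N by rewrite NE; lia.
  have hz1 : z ^+ h.+1 = 1 by rewrite hz hbN1 rmorph1.
  have [x hx] := key_pow hdm z0 hz1.
  have x0 : x != 0 by apply: contra z0; rewrite hx => /eqP ->; rewrite expr0n; case: (h) h_gt0.
  pose y := x ^+ h.*2.
  have hzy : z = y ^+ 2 by rewrite hx /y -exprM muln2.
  have hy1 : y ^+ q.+1 = 1 by rewrite qp1 /y -exprM -NE pow_card1.
  pose y' := y ^+ q.
  have hyy' : y * y' = 1 by rewrite /y' -exprS hy1.
  have hvE : (y + y') ^+ q = y + y' by rewrite frobD frob2 addrC.
  have [v hv] := fix_in hvE.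
  have hy'2 : y' ^+ 2 = w.
    by apply: (inv_uniq (z:=z)); [rewrite hzy -exprMn hyy' expr1n | exact: hzw].
  have hv2 : v ^+ 2 = (t + 1) *+ 2.
    apply: (fmorph_inj f); rewrite rmorphXn -hv.
    have -> : (y + y') ^+ 2 = y ^+ 2 + y' ^+ 2 + (y * y') *+ 2 by rewrite -alg5 subrK.
    by rewrite -hzy hy'2 hyy' -hs rmorphMn rmorphD rmorph1 mulrnDl.
  have v0 : v != 0 by apply: contra t2 => /eqP v0; rewrite -hv2 v0 expr0n.
  apply: sg_solve; first by rewrite hbe; exact: N_sg.
  by rewrite hbe -chi2 -hv2 chi_sq.
- have hbm : b * N = -1 by case/orP: hbN => /eqP // h1; move: hbN1; rewrite h1 eqxx.
  have hbe : b = - N.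
    by rewrite -(sg_solve N_sg (x := - b)) ?opprK // mulNr hbm opprK.
  have ztop : forall u, z = u ^+ 2 -> u ^+ q.+1 = 1 -> False.
    move=> u hu hu1; move: hz; rewrite hbm rmorphN rmorph1 hu -exprM mul2n -qp1 hu1.
    by move=> /eqP; rewrite eq_sym (negbTE fm1_neq1).
  have [htp|htp] : (t + 1) ^+ h = N \/ (t + 1) ^+ h = - N.
    case: (eqVneq ((t + 1) ^+ h) (- N)) => e; [by right|left].
    by rewrite (sg_neq (sg_chi tp1) (sgN N_sg) e) opprK.
  2: by rewrite hbe.
  exfalso.
  have hsq : is_square ((t + 1) *+ 2) by rewrite chi_sqE // chi2 htp NN.
  case/existsP: hsq => v /eqP hv.
  pose v' := v / 2.
  have hv' : v' ^+ 2 - 1 = (t - 1) / 2 := alg4 two_neq0 hv.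
  have htm : (t - 1) ^+ h = - N.
    have : (- (t - 1) ^+ h) * N = 1 by rewrite mulNr -htp hprod opprK.
    by move/(sg_solve N_sg) => <-; rewrite opprK.
  have hnsq : ~~ is_square (v' ^+ 2 - 1).
    rewrite hv'.
    have tm1 : t - 1 != 0 by apply: contra N_ne0 => /eqP e; rewrite -oppr_eq0 -htm e chi0.
    have d0 : (t - 1) / 2 != 0 by rewrite mulf_neq0 // invr_eq0 two_neq0.
    by rewrite chi_sqE // chiM htm exprVn mulNr mulfV ?N_ne0 // m1_neq1.
  have [y [y'' [hry [_ hy1]]]] := lift v'.
  have hyq := hy1 hnsq.
  case: hry => hyy hsy.
  have hv'2 : v' *+ 2 = v by rewrite /v' -[_ *+ 2]mulr_natr mulfVK // two_neq0.
  have hsum : y ^+ 2 + y'' ^+ 2 = z + w.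
    rewrite -alg5 -hsy hyy -hs.
    have : f ((v' *+ 2) ^+ 2 - 1 *+ 2) = f (t *+ 2) by rewrite hv'2 hv mulrnDl addrK.
    by rewrite rmorphB rmorphXn !rmorphMn rmorph1.
  have hp2 : y ^+ 2 * y'' ^+ 2 = 1 by rewrite -exprMn hyy expr1n.
  case: (root2 hzw hp2 (esym hsum)) => e.
    exact: (ztop y (esym e) hyq).
  apply: (ztop y'').
    by apply: (inv_uniq (z := w)); [rewrite mulrC hzw | rewrite -e hp2].
  by move: (expr1n E q.+1); rewrite -hyy exprMn hyq mul1r.
Qed.

Lemma class a b t z w : sg a -> sg b -> rep t z w -> z ^+ 2 != 1 -> inS a b z -> t \in AF a b.
Proof.
move=> ha hb hr hz2; rewrite /inS /mm /sig; case: ifP => [/eqP <-|hab] hz.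
  by rewrite inE; have [-> ->] := class_eq ha hr hz2 hz; rewrite !eqxx.
rewrite inE; have [-> ->] := class_neq hb hr hz2 hz.
by rewrite -(sg_neq ha hb (negbT hab)) !eqxx.
Qed.

Lemma out a b t z w : sg a -> sg b -> rep t z w -> inS a b z ->
  t \in AF a b \/ (z = 1 /\ t = 1) \/ (z = -1 /\ t = -1).
Proof.
move=> ha hb hr hz; case: (eqVneq (z ^+ 2) 1) => hz2.
  case: (rep_pm1 hr hz2) => [[-> [_ ->]]|[-> [_ ->]]]; [right; left|right; right]; by [].
by left; exact: class ha hb hr hz2 hz.
Qed.

Lemma pow_inv (z w : E) n : z * w = 1 -> z ^+ n = 1 -> w ^+ n = 1.
Proof. by move=> hzw hz; move: (expr1n E n); rewrite -hzw exprMn hz mul1r. Qed.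

Lemma lift' t z w : rep t z w -> z ^+ q.-1 = 1 \/ z ^+ q.+1 = 1.
Proof.
move=> [hzw hs]; have [z0 [w0 [[hzw0 hs0] [h1 h2]]]] := lift t.
have hzz : (z0 ^+ q.-1 = 1 \/ z0 ^+ q.+1 = 1).
  by case: (boolP (is_square (t ^+ 2 - 1))) => hq; [left; apply: h1|right; apply: h2].
have hsum : z0 + w0 = z + w by rewrite -hs -hs0.
case: (root2 hzw0 hzw hsum) => ->; first by [].
by case: hzz => hzz; [left|right]; apply: pow_inv hzz.
Qed.

Lemma sq1 (x : E) : x ^+ 2 = 1 -> exists s, sg s /\ x = f s.
Proof.
move/eqP; rewrite sqrf_eq1 => /orP [] /eqP ->; [exists 1|exists (-1)];
  rewrite /sg ?eqxx ?orbT ?rmorphN rmorph1 //.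
Qed.

Lemma AF_1 a b : sg a -> (1 \in AF a b) = false.
Proof. by move=> ha; rewrite inE subrr chi0 eq_sym (negbTE (sg_ne0 ha)). Qed.

Lemma AF_m1 a b : sg b -> (-1 \in AF a b) = false.
Proof. by move=> hb; rewrite inE addNr chi0 [0 == b]eq_sym (negbTE (sg_ne0 hb)) andbF. Qed.

Lemma AF_uniq a b a' b' t : t \in AF a b -> t \in AF a' b' -> a = a' /\ b = b'.
Proof. by rewrite !inE => /andP [/eqP <- /eqP <-] /andP [/eqP <- /eqP <-]. Qed.

Lemma negx_neq (x : F) : x != 0 -> - x != x.
Proof.
move=> x0; apply/negP => /eqP e.
have : x *+ 2 = 0 by rewrite mulr2n -{1}e addNr.
by move/eqP; rewrite -mulr_natr mulf_eq0 (negbTE x0) (negbTE two_neq0).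
Qed.

Lemma liftall a b t z w : sg a -> sg b -> t \in AF a b -> rep t z w -> inS a b z.
Proof.
move=> ha hb ht hr.
have hz2 : z ^+ 2 != 1.
  apply/negP => /eqP hz2; case: (rep_pm1 hr hz2) => [[_ [_ e]]|[_ [_ e]]]; move: ht; rewrite e.
    by rewrite AF_1.
  by rewrite AF_m1.
case: (lift' hr) => hq.
- have [s [hs hzs]] : exists s, sg s /\ z ^+ h = f s.
    by apply: sq1; rewrite -exprM muln2 -qm1.
  have hs' : sg (s * N) by apply: sgM => //; exact: N_sg.
  have hin : inS (s * N) (s * N) z by rewrite /inS /mm /sig eqxx -mulrA NN mulr1.
  have [e1 e2] := AF_uniq ht (class hs' hs' hr hz2 hin).
  by rewrite e1 e2.
- have [s [hs hzs]] : exists s, sg s /\ z ^+ h.+1 = f s.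
    by apply: sq1; rewrite -exprM muln2 -qp1.
  have hs' : sg (s * N) by apply: sgM => //; exact: N_sg.
  have hne : - (s * N) != s * N := negx_neq (sg_ne0 hs').
  have hin : inS (- (s * N)) (s * N) z by rewrite /inS /mm /sig (negbTE hne) -mulrA NN mulr1.
  have [e1 e2] := AF_uniq ht (class (sgN hs') hs' hr hz2 hin).
  by rewrite e1 e2.
Qed.

Lemma pi_lemma (x : E) : x != 0 -> (x ^+ q.-1 = 1 \/ x ^+ q.+1 = 1) -> exists u, rep u x x^-1.
Proof.
move=> x0 hq.
have hfix : (x + x^-1) ^+ q = x + x^-1.
  have q0 : q = q.-1.+1 by rewrite qE.
  case: hq => hq.
  - have hxq : x ^+ q = x by rewrite q0 exprS hq mulr1.
    by rewrite frobD exprVn hxq.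
  - have hxq : x ^+ q = x^-1.
      by apply: (mulIf x0); rewrite -exprSr hq mulVf.
    by rewrite frobD exprVn hxq invrK addrC.
have [c hc] := fix_in hfix.
exists (c / 2); split; first by rewrite mulfV.
by rewrite -rmorphMn -[_ *+ 2]mulr_natr mulfVK ?two_neq0.
Qed.

Lemma rep_Zeq t1 t2 Z W1 W2 : rep t1 Z W1 -> rep t2 Z W2 -> t1 = t2.
Proof.
move=> [h1 s1] [h2 s2]; have e := inv_uniq h1 h2.
by apply: mul2I; apply: (fmorph_inj f); rewrite !rmorphMn s1 s2 e.
Qed.

Lemma rep_eq u1 u2 z1 w1 z2 w2 : rep u1 z1 w1 -> rep u2 z2 w2 -> (z2 = z1 \/ z2 = w1) -> u1 = u2.
Proof.
move=> [h1 s1] [h2 s2] [] e.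
- apply: rep_Zeq (conj h1 s1) _; rewrite -e; exact: conj h2 s2.
- have e' : w2 = z1 by apply: (inv_uniq (z := w1)); [rewrite -e | rewrite mulrC].
  by apply: mul2I; apply: (fmorph_inj f); rewrite !rmorphMn s1 s2 e e' addrC.
Qed.

Lemma rep_in t z w : rep t z w -> z * w = 1. Proof. by case. Qed.

Lemma mm_gt0 a b : (0 < mm a b)%N.
Proof. by rewrite /mm; case: ifP => _ //; exact: h_gt0. Qed.

Lemma mm_dvd a b : (mm a b %| #|E|.-1)%N.
Proof.
rewrite NE /mm; case: ifP => _.
  by apply: dvdn_mulr; rewrite -muln2 dvdn_mulr.
by apply: dvdn_mull; rewrite -muln2 dvdn_mulr.
Qed.

Lemma step a b u k : sg a -> sg b -> u \in AF a b ->
  exists z w, [/\ rep u z w, inS a b z, z ^+ 2 != 1 & rep (chebF k u) (z ^+ k) (w ^+ k)].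
Proof.
move=> ha hb hu; have [z [w [hr _]]] := lift u.
exists z, w; split => //; first exact: liftall hr.
  apply/negP => /eqP hz2; case: (rep_pm1 hr hz2) => [[_ [_ e]]|[_ [_ e]]]; move: hu; rewrite e.
    by rewrite AF_1.
  by rewrite AF_m1.
exact: rep_cheb.
Qed.

Lemma pow1_ne0 (x : E) n : (0 < n)%N -> x ^+ n = 1 -> x != 0.
Proof.
move=> n0 hx; apply/negP => /eqP x0; move: hx; rewrite x0 expr0n eqn0Ngt n0 /= => /eqP.
by rewrite eq_sym oner_eq0.
Qed.

Lemma vi_main a b k : sg a -> sg b -> (0 < k)%N -> AF a b != set0 ->
  (permutes (chebF k) (AF a b) <->
   gcdn k (if sig a b == 1 then mm a b else (mm a b).*2) = 1%N).
Proof.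
move=> ha hb k0 hne.
set m := mm a b; set s := sig a b; set d := if s == 1 then m else m.*2.
have hs : sg s := sig_sg ha hb.
have m0 : (0 < m)%N := mm_gt0 a b.
have d0 : (0 < d)%N by rewrite /d; case: ifP => _; rewrite ?double_gt0.
have hzd : forall z, inS a b z -> z ^+ d = 1.
  move=> z; rewrite /inS -/m -/s /d; case: ifP => [/eqP ->|_] hz; first by rewrite hz rmorph1.
  by rewrite -muln2 exprM hz fsg_sq.
split.
-
  case=> hmap hinj.
  apply/eqP; apply: contraT => hg.
  have g0 : (0 < gcdn k d)%N by rewrite gcdn_gt0 k0.
  have g1 : (1 < gcdn k d)%N by move/eqP: hg; lia.
  set r := pdiv (gcdn k d).
  have pr : prime r := pdiv_prime g1.
  have r1 : (1 < r)%N := prime_gt1 pr.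
  have rg : (r %| gcdn k d)%N := pdiv_dvd _.
  have rk : (r %| k)%N := dvdn_trans rg (dvdn_gcdl k d).
  have rd : (r %| d)%N := dvdn_trans rg (dvdn_gcdr k d).
  have [u0 hu0] : exists u0, u0 \in AF a b by apply/set0Pn.
  have [z [w [hr hin hz2 hrk]]] := step k ha hb hu0.
  have z0 := rep_ne0 hr.
  have hT : chebF k u0 \in AF a b := hmap u0 hu0.
  have hZ2 : (z ^+ k) ^+ 2 != 1.
    apply/negP => /eqP hZ; case: (rep_pm1 hrk hZ) => [[_ [_ e]]|[_ [_ e]]]; move: hT; rewrite e.
      by rewrite AF_1.
    by rewrite AF_m1.
  have hinZ : inS a b (z ^+ k) := liftall ha hb hT hrk.
  have hsk : s ^+ k = s.
    apply: (fmorph_inj f); move: hinZ; rewrite /inS -/m -/s -exprM mulnC exprM hin rmorphXn.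
    by [].
  have rm : (r %| m)%N.
    case: (eqVneq s 1) => es; first by move: rd; rewrite /d es eqxx.
    have es' : s = -1 by case/orP: hs => /eqP // e; move: es; rewrite e eqxx.
    have ko : odd k.
      apply: contraT => hk; move: hsk; rewrite es' -signr_odd (negbTE hk) expr0 => /eqP.
      by rewrite eq_sym (negbTE m1_neq1).
    have ro : odd r.
      apply: contraT => hro; move: ko; rewrite -[odd k]negbK -dvdn2.
      by rewrite (dvdn_trans _ rk) // dvdn2.
    by move: rd; rewrite /d (negbTE es) -mul2n Gauss_dvdr ?coprimen2.
  have rN : (r %| #|E|.-1)%N := dvdn_trans rm (mm_dvd a b).
  have [om [hor ho1]] := exists_ord rN r1.
  have o0 : om != 0 := pow1_ne0 (ltnW r1) hor.
  have hom : om ^+ m = 1 by case/dvdnP: rm => j ->; rewrite mulnC exprM hor expr1n.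
  have hok : om ^+ k = 1 by case/dvdnP: rk => j ->; rewrite mulnC exprM hor expr1n.
  have hx : forall x, x ^+ m = f s -> x ^+ k = z ^+ k -> x = z \/ x = w.
    move=> x hxm hxk.
    have x0 : x != 0 by move: (sg_ne0 hs); rewrite -(fmorph_eq0 f) -hxm expf_eq0 m0.
    have hq : x ^+ q.-1 = 1 \/ x ^+ q.+1 = 1.
      have := inS_card ha hb hxm; case: ifP => _ ->; by [left|right].
    have [u hu] := pi_lemma x0 hq.
    have x2 : x ^+ 2 != 1.
      apply: contra hZ2 => /eqP e; by rewrite -hxk -exprM mulnC exprM e expr1n.
    have huA : u \in AF a b := class ha hb hu x2 hxm.
    have hru := rep_cheb k hu; rewrite hxk in hru.
    have hTu : chebF k u = chebF k u0 := rep_Zeq hru hrk.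
    have heq := hinj u u0 huA hu0 hTu.
    rewrite heq in hu.
    case: hr => hzw hs0; case: hu => hxx hs1.
    by apply: (root2 hzw hxx); rewrite -hs0 -hs1.
  have h1 : z * om = w.
    case: (hx (z * om)).
    - by rewrite exprMn hom mulr1 hin.
    - by rewrite exprMn hok mulr1.
    - move=> e; exfalso; move: ho1; rewrite -(mulfI z0 (etrans e (esym (mulr1 z)))) eqxx.
      by [].
    - by [].
  have h2 : (om ^+ 2 = 1) \/ (z * om ^+ 2 = w).
    case: (hx (z * om ^+ 2)).
    - by rewrite exprMn -exprM mulnC exprM hom expr1n mulr1 hin.
    - by rewrite exprMn -exprM mulnC exprM hok expr1n mulr1.
    - by move=> e; left; apply: (mulfI z0); rewrite e mulr1.
    - by right.
  case: h2 => e2.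
  + have om1 : om = -1 by move/eqP: e2; rewrite sqrf_eq1 (negbTE ho1) /= => /eqP.
    have re : ~~ odd r.
      apply/negP => ro; move: hor; rewrite om1 -signr_odd ro expr1 => /eqP.
      by rewrite (negbTE fm1_neq1).
    have ke : ~~ odd k.
      by rewrite -dvdn2 (dvdn_trans _ rk) // dvdn2.
    have hz2' : z ^+ 2 = -1.
      case: hr => hzw _; move: hzw; rewrite -h1 om1 mulrN1 mulrN expr2 => e.
      by rewrite -e opprK.
    by move: hZ2; rewrite -exprM mulnC exprM hz2' -signr_odd (negbTE ke) expr0 eqxx.
  + exfalso; move: ho1; have : z * om ^+ 2 = z * om by rewrite e2 h1.
    rewrite expr2 mulrA => e.
    have -> : om = 1 by apply: (mulfI (mulf_neq0 z0 o0)); rewrite e mulr1.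
    by rewrite eqxx.
-
  move=> hg.
  have [km kn hkm _] := egcdnP d k0.
  rewrite hg in hkm.
  have hinv : forall z : E, z ^+ d = 1 -> (z ^+ k) ^+ km = z.
    by move=> z hz; rewrite -exprM mulnC hkm exprD mulnC exprM hz expr1n mul1r expr1.
  have hsk : s ^+ k = s.
    case/orP: hs => /eqP e; first by rewrite e expr1n.
    rewrite e -signr_odd; case: (boolP (odd k)) => // hk; exfalso.
    have hd2 : (2 %| d)%N by rewrite /d e (negbTE m1_neq1) -muln2 dvdn_mull.
    have hk2 : (2 %| k)%N by rewrite dvdn2 hk.
    by move: (dvdn_gcd 2 k d); rewrite hg hd2 hk2.
  split.
  + move=> u hu; have [z [w [hr hin hz2 hrk]]] := step k ha hb hu.
    apply: (class ha hb hrk).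
    * apply/negP => /eqP hZ; move: hz2.
      by rewrite -(hinv z (hzd z hin)) -exprM mulnC exprM hZ expr1n eqxx.
    * by rewrite /inS -exprM mulnC exprM hin -rmorphXn hsk.
  + move=> u1 u2 hu1 hu2 heq.
    have [z1 [w1 [hr1 hin1 _ hrk1]]] := step k ha hb hu1.
    have [z2 [w2 [hr2 hin2 _ hrk2]]] := step k ha hb hu2.
    rewrite -heq in hrk2.
    apply: (rep_eq hr1 hr2).
    have hw1 : w1 ^+ d = 1 by apply: pow_inv (rep_in hr1) (hzd z1 hin1).
    case: hrk1 => hZ1 hS1; case: hrk2 => hZ2 hS2.
    have hS : z1 ^+ k + w1 ^+ k = z2 ^+ k + w2 ^+ k by rewrite -hS1 -hS2.
    case: (root2 hZ1 hZ2 hS) => e.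
    * by left; rewrite -(hinv z2 (hzd z2 hin2)) e hinv // hzd.
    * by right; rewrite -(hinv z2 (hzd z2 hin2)) e hinv.
Qed.

Lemma NmN : (N == - N) = false.
Proof. by apply/negbTE; rewrite eq_sym; exact: negx_neq N_ne0. Qed.

Lemma mNN : (- N == N) = false.
Proof. by apply/negbTE; exact: negx_neq N_ne0. Qed.

Lemma fEps_pow : (-1 : E) ^+ h = f Eps.
Proof. by rewrite rmorphXn rmorphN rmorph1. Qed.

Lemma img_h t Z W : rep t Z W -> Z ^+ h = 1 -> t \in AF N N :|: [set 1; - Eps].
Proof.
move=> hr hZ.
have hin : inS N N Z by rewrite /inS /mm /sig eqxx NN rmorph1.
case: (out N_sg N_sg hr hin) => [hA|[[_ ->]|[hZ1 ->]]]; first by rewrite in_setU hA.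
  by rewrite !inE !eqxx /= ?orbT.
rewrite !inE.
have -> : Eps = 1 by apply: (fmorph_inj f); rewrite -fEps_pow -hZ1 hZ rmorph1.
by rewrite !eqxx /= ?orbT.
Qed.

Lemma img_h' t Z W : rep t Z W -> Z ^+ h.+1 = 1 -> t \in AF (- N) N :|: [set 1; Eps].
Proof.
move=> hr hZ.
have hin : inS (- N) N Z by rewrite /inS /mm /sig mNN NN rmorph1.
case: (out (sgN N_sg) N_sg hr hin) => [hA|[[_ ->]|[hZ1 ->]]]; first by rewrite in_setU hA.
  by rewrite !inE !eqxx /= ?orbT.
rewrite !inE.
have -> : Eps = -1.
  apply: (fmorph_inj f); rewrite -fEps_pow rmorphN rmorph1.
  by move: hZ; rewrite hZ1 exprS mulN1r => /eqP; rewrite eqr_oppLR => /eqP.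
by rewrite !eqxx /= ?orbT.
Qed.

Lemma step_pow a b u k : sg a -> sg b -> u \in AF a b ->
  exists Z W, rep (chebF k u) Z W /\ Z ^+ mm a b = f (sig a b ^+ k).
Proof.
move=> ha hb hu; have [z [w [_ hin _ hrk]]] := step k ha hb hu.
by exists (z ^+ k), (w ^+ k); split => //; rewrite -exprM mulnC exprM hin rmorphXn.
Qed.

Lemma odd_out a b u k : sg a -> sg b -> odd k -> u \in AF a b -> exists Z,
  (chebF k u \in AF a b \/ (Z = 1 /\ chebF k u = 1) \/ (Z = -1 /\ chebF k u = -1)) /\
  Z ^+ mm a b = f (sig a b).
Proof.
move=> ha hb hk hu; have [Z [W [hr hZ]]] := step_pow k ha hb hu.
have hsk : sig a b ^+ k = sig a b.
  by case/orP: (sig_sg ha hb) => /eqP ->; rewrite ?expr1n // -signr_odd hk expr1.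
rewrite hsk in hZ; exists Z; split => //.
by case: (out ha hb hr hZ) => [?|[[-> ->]|[-> ->]]]; [left|right;left|right;right].
Qed.

Lemma fm1 : f (-1) = -1. Proof. by rewrite rmorphN rmorph1. Qed.

Lemma part_i k :
  (forall u, u \in AF N N -> chebF k u \in AF N N :|: [set 1; - Eps]) /\
  (forall u, u \in AF (- N) N -> chebF k u \in AF (- N) N :|: [set 1; Eps]).
Proof.
split=> u hu.
- have [Z [W [hr hZ]]] := step_pow k N_sg N_sg hu.
  apply: (img_h hr); move: hZ; by rewrite /mm /sig eqxx NN expr1n rmorph1.
- have [Z [W [hr hZ]]] := step_pow k (sgN N_sg) N_sg hu.
  apply: (img_h' hr); move: hZ; by rewrite /mm /sig mNN NN expr1n rmorph1.
Qed.

Lemma part_iii k : ~~ odd k ->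
  (forall u, u \in AF (- N) (- N) -> chebF k u \in AF N N :|: [set 1; - Eps]) /\
  (forall u, u \in AF N (- N) -> chebF k u \in AF (- N) N :|: [set 1; Eps]).
Proof.
move=> hk; split=> u hu.
- have [Z [W [hr hZ]]] := step_pow k (sgN N_sg) (sgN N_sg) hu.
  apply: (img_h hr); move: hZ.
  by rewrite /mm /sig eqxx mulNr NN -signr_odd (negbTE hk) expr0 rmorph1.
- have [Z [W [hr hZ]]] := step_pow k N_sg (sgN N_sg) hu.
  apply: (img_h' hr); move: hZ.
  by rewrite /mm /sig NmN mulNr NN -signr_odd (negbTE hk) expr0 rmorph1.
Qed.

Lemma part_ii k : odd k ->
  (forall u, u \in AF (Eps * N) (- N) -> chebF k u \in AF (Eps * N) (- N) :|: [set -1]) /\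
  (forall u, u \in AF (- (Eps * N)) (- N) -> chebF k u \in AF (- (Eps * N)) (- N)).
Proof.
move=> hk.
have c1 : (1 : E) != f (-1) by rewrite fm1 eq_sym fm1_neq1.
have hEf := fEps_pow.
case/orP: Eps_sg => /eqP hE; rewrite hE in hEf *; rewrite ?mul1r ?mulN1r ?opprK ?rmorph1 ?fm1 in hEf *.
- split=> u hu.
  + have [Z [hc hZ]] := odd_out N_sg (sgN N_sg) hk hu.
    move: hZ; rewrite /mm /sig NmN mulNr NN => hZ.
    case: hc => [hA|[[hZ1 _]|[_ ->]]]; first by rewrite in_setU hA.
      by move: hZ; rewrite hZ1 expr1n => /eqP; rewrite (negbTE c1).
    by rewrite !inE eqxx orbT.
  + have [Z [hc hZ]] := odd_out (sgN N_sg) (sgN N_sg) hk hu.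
    move: hZ; rewrite /mm /sig eqxx mulNr NN => hZ.
    case: hc => [hA|[[hZ1 _]|[hZ1 _]]]; first by [].
      by move: hZ; rewrite hZ1 expr1n => /eqP; rewrite (negbTE c1).
    by move: hZ; rewrite hZ1 hEf => /eqP; rewrite (negbTE c1).
- split=> u hu.
  + have [Z [hc hZ]] := odd_out (sgN N_sg) (sgN N_sg) hk hu.
    move: hZ; rewrite /mm /sig eqxx mulNr NN => hZ.
    case: hc => [hA|[[hZ1 _]|[_ ->]]]; first by rewrite in_setU hA.
      by move: hZ; rewrite hZ1 expr1n => /eqP; rewrite (negbTE c1).
    by rewrite !inE eqxx orbT.
  + have [Z [hc hZ]] := odd_out N_sg (sgN N_sg) hk hu.
    move: hZ; rewrite /mm /sig NmN mulNr NN => hZ.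
    case: hc => [hA|[[hZ1 _]|[hZ1 _]]]; first by [].
      by move: hZ; rewrite hZ1 expr1n => /eqP; rewrite (negbTE c1).
    by move: hZ; rewrite hZ1 exprS hEf mulN1r opprK => /eqP; rewrite (negbTE c1).
Qed.

Lemma pm_in (A : {set F}) t : t = 1 \/ t = -1 -> t \in A :|: [set 1; -1].
Proof. by case=> ->; rewrite in_setU ?set21 ?set22 orbT. Qed.

Lemma pm_in2 (A B : {set F}) t : t = 1 \/ t = -1 -> t \in A :|: B :|: [set 1; -1].
Proof. exact: pm_in. Qed.

Lemma eps_in (A : {set F}) t : t \in A :|: [set 1; Eps] -> t \in A :|: [set 1; -1].
Proof.
rewrite !in_setU => /orP [->//|]; rewrite !inE => /orP [/eqP ->|/eqP ->]; rewrite ?eqxx ?orbT //.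
by case/orP: Eps_sg => /eqP ->; rewrite eqxx ?orbT.
Qed.

Lemma meps_in (A : {set F}) t : t \in A :|: [set 1; - Eps] -> t \in A :|: [set 1; -1].
Proof.
rewrite !in_setU => /orP [->//|]; rewrite !inE => /orP [/eqP ->|/eqP ->]; rewrite ?eqxx ?orbT //.
by case/orP: Eps_sg => /eqP ->; rewrite ?opprK eqxx ?orbT.
Qed.

Lemma part_iv k u : (h %| k)%N ->
  chebF k u \in AF 1 (-1) :|: AF (-1) 1 :|: [set 1; -1] /\
  (~~ odd k -> chebF k u \in AF (- N) N :|: [set 1; -1]).
Proof.
move=> hk; have [z [w [hr _]]] := lift u; have hrk := rep_cheb k hr.
have hpm : (z ^+ k) ^+ 2 = 1 -> chebF k u = 1 \/ chebF k u = -1.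
  by move=> h2; case: (rep_pm1 hrk h2) => [[_ [_ ->]]|[_ [_ ->]]]; [left|right].
case: (lift' hr) => hq.
  have h2 : (z ^+ k) ^+ 2 = 1.
    case/dvdnP: hk => j ->; rewrite -exprM.
    have -> : (j * h * 2 = h.*2 * j)%N by lia.
    by rewrite exprM -qm1 hq expr1n.
  by split; [apply: pm_in2; apply: hpm | move=> _; apply: pm_in; apply: hpm].
have hZq : (z ^+ k) ^+ q.+1 = 1 by rewrite -exprM mulnC exprM hq expr1n.
have [s [hs hZs]] : exists s, sg s /\ (z ^+ k) ^+ h.+1 = f s.
  by apply: sq1; rewrite -exprM muln2 -qp1.
have hsN : sg (s * N) by apply: sgM => //; exact: N_sg.
have hin : inS (- (s * N)) (s * N) (z ^+ k).
  by rewrite /inS /mm /sig (negbTE (negx_neq (sg_ne0 hsN))) -mulrA NN mulr1.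
split.
  case: (out (sgN hsN) hsN hrk hin) => [hA|[[_ ->]|[_ ->]]]; last 2 first.
  - by apply: pm_in2; left.
  - by apply: pm_in2; right.
  rewrite !in_setU; case/orP: hsN => /eqP e; rewrite e ?opprK in hA; rewrite hA ?orbT //.
move=> hke; apply: eps_in; apply: (img_h' hrk).
move: hke; rewrite -dvdn2 => /dvdnP [j ->].
rewrite -exprM; have -> : (j * 2 * h.+1 = (h.+1).*2 * j)%N by lia.
by rewrite exprM -qp1 hq expr1n.
Qed.

Lemma part_v k u : (h.+1 %| k)%N ->
  chebF k u \in AF 1 1 :|: AF (-1) (-1) :|: [set 1; -1] /\
  (~~ odd k -> chebF k u \in AF N N :|: [set 1; -1]).
Proof.
move=> hk; have [z [w [hr _]]] := lift u; have hrk := rep_cheb k hr.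
have hpm : (z ^+ k) ^+ 2 = 1 -> chebF k u = 1 \/ chebF k u = -1.
  by move=> h2; case: (rep_pm1 hrk h2) => [[_ [_ ->]]|[_ [_ ->]]]; [left|right].
case: (lift' hr) => hq; last first.
  have h2 : (z ^+ k) ^+ 2 = 1.
    case/dvdnP: hk => j ->; rewrite -exprM.
    have -> : (j * h.+1 * 2 = (h.+1).*2 * j)%N by lia.
    by rewrite exprM -qp1 hq expr1n.
  by split; [apply: pm_in2; apply: hpm | move=> _; apply: pm_in; apply: hpm].
have hZq : (z ^+ k) ^+ q.-1 = 1 by rewrite -exprM mulnC exprM hq expr1n.
have [s [hs hZs]] : exists s, sg s /\ (z ^+ k) ^+ h = f s.
  by apply: sq1; rewrite -exprM muln2 -qm1.
have hsN : sg (s * N) by apply: sgM => //; exact: N_sg.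
have hin : inS (s * N) (s * N) (z ^+ k).
  by rewrite /inS /mm /sig eqxx -mulrA NN mulr1.
split.
  case: (out hsN hsN hrk hin) => [hA|[[_ ->]|[_ ->]]]; last 2 first.
  - by apply: pm_in2; left.
  - by apply: pm_in2; right.
  rewrite !in_setU; case/orP: hsN => /eqP e; rewrite e in hA; rewrite hA ?orbT //.
move=> hke; apply: meps_in; apply: (img_h hrk).
move: hke; rewrite -dvdn2 => /dvdnP [j ->].
rewrite -exprM; have -> : (j * 2 * h = h.*2 * j)%N by lia.
by rewrite exprM -qm1 hq expr1n.
Qed.

Lemma sq_split (u : F) : u - 1 != 0 -> u + 1 != 0 ->
  is_square (u ^+ 2 - 1) = ((u - 1) ^+ h * (u + 1) ^+ h == 1).
Proof.
move=> h1 h2; have e : u ^+ 2 - 1 = (u - 1) * (u + 1) by rewrite -[_ * _]subr_sqr expr1n.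
by rewrite e chi_sqE ?mulf_neq0 // chiM.
Qed.

Lemma set_iv : AF 1 (-1) :|: AF (-1) 1 = [set a : F | ~~ is_square (a ^+ 2 - 1)].
Proof.
have o0 : (1 : F) != 0 := oner_neq0 F.
have m0 : (-1 : F) != 0 by rewrite oppr_eq0.
apply/setP => u; rewrite !inE.
have [e1|h1] := eqVneq (u - 1) 0.
  have -> : u = 1 by apply/eqP; rewrite -subr_eq0 e1.
  rewrite subrr expr2 mulr1 subrr; have -> : is_square (0 : F).
    by apply/existsP; exists 0; rewrite expr0n.
  by rewrite chi0 !(eq_sym 0) (negbTE o0) (negbTE m0).
have [e2|h2] := eqVneq (u + 1) 0.
  have -> : u = -1 by apply/eqP; rewrite -addr_eq0 e2.
  rewrite sqrrN expr1n subrr; have -> : is_square (0 : F).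
    by apply/existsP; exists 0; rewrite expr0n.
  by rewrite addNr chi0 !(eq_sym 0) (negbTE o0) (negbTE m0) !andbF.
rewrite sq_split //.
have m1' : ((1 : F) == -1) = false by rewrite eq_sym (negbTE m1_neq1).
move: (sg_chi h1) (sg_chi h2) => /orP [] /eqP -> /orP [] /eqP ->;
  by rewrite ?mul1r ?mulr1 ?mulN1r ?opprK !eqxx /= ?m1' ?(negbTE m1_neq1).
Qed.

Lemma set_v : AF 1 1 :|: AF (-1) (-1) :|: [set 1; -1] = [set a : F | is_square (a ^+ 2 - 1)].
Proof.
have sq0 : is_square (0 : F) by apply/existsP; exists 0; rewrite expr0n.
apply/setP => u; rewrite !inE.
have [e1|h1] := eqVneq (u - 1) 0.
  have -> : u = 1 by apply/eqP; rewrite -subr_eq0 e1.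
  by rewrite expr1n subrr sq0 eqxx !orbT.
have [e2|h2] := eqVneq (u + 1) 0.
  have -> : u = -1 by apply/eqP; rewrite -addr_eq0 e2.
  by rewrite sqrrN expr1n subrr sq0 eqxx !orbT.
have u1 : (u == 1) = false by apply/negbTE; apply: contra h1 => /eqP ->; rewrite subrr.
have um1 : (u == -1) = false by apply/negbTE; apply: contra h2 => /eqP ->; rewrite addNr.
rewrite sq_split // u1 um1 !orbF.
have m1' : ((1 : F) == -1) = false by rewrite eq_sym (negbTE m1_neq1).
move: (sg_chi h1) (sg_chi h2) => /orP [] /eqP -> /orP [] /eqP ->;
  by rewrite ?mul1r ?mulr1 ?mulN1r ?opprK !eqxx /= ?m1' ?(negbTE m1_neq1).
Qed.


End Main.

Lemma ext_exists (F : finFieldType) : odd #|F| ->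
  exists (E : finFieldType) (f : {rmorphism F -> E}), #|E| = (#|F| ^ 2)%N.
Proof.
move=> hodd; have [d hd] := exists_nsq hodd.
pose p : {poly F} := 'X^2 - d%:P.
have hs : size p = 3%N by rewrite size_XnsubC.
have hI : monic_irreducible_poly p.
  split; last exact: monicXnsubC.
  apply: cubic_irreducible; first by rewrite hs.
  move=> x; apply/negP; rewrite /root /p !hornerE => /eqP e.
  have ex : x ^+ 2 = d by apply/eqP; rewrite -subr_eq0 -e.
  by move/negP: hd; apply; apply/existsP; exists x; rewrite ex.
exists {poly %/ p with hI}, (in_alg {poly %/ p with hI}).
by rewrite card_qfpoly hs.
Qed.

Lemma memL_N (e : int) : e \in [:: -1; 0; 1] -> - e \in [:: -1; 0; 1].
Proof. by rewrite !inE => /or3P [] /eqP ->. Qed.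

Lemma memL_M (e1 e2 : int) : e1 \in [:: -1; 0; 1] -> e2 \in [:: -1; 0; 1] ->
  e1 * e2 \in [:: -1; 0; 1].
Proof. by rewrite !inE => /or3P [] /eqP -> /or3P [] /eqP ->. Qed.

Lemma memL_pm (e : int) : e \in [:: 1; -1] -> e \in [:: -1; 0; 1].
Proof. by rewrite !inE => /orP [] /eqP ->. Qed.

Theorem theorem9p1 (F : finFieldType) (hodd : odd #|F|) (k : nat) (hk : (1 <= k)%N) :
  let q := #|F| in
  let eps := legendre (-1 : F) in
  let nu := legendre (2 : F) in
  let T := chebF (F:=F) k in
  let A := fun e1 e2 : int => Aset e1 e2 (1 : F) in
  (cheb k).[1] = 1 /\ (cheb k).[-1] = (-1) ^+ k /\
  (* (i) *)
    ((forall u, u \in A nu nu -> T u \in A nu nu :|: [set 1; (- eps)%:~R])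
    /\ (forall u, u \in A (- nu) nu -> T u \in A (- nu) nu :|: [set 1; eps%:~R])) /\
  (* (ii) *)
    (odd k ->
      (forall u, u \in A (eps * nu) (- nu) -> T u \in A (eps * nu) (- nu) :|: [set -1])
      /\ (forall u, u \in A (- (eps * nu)) (- nu) -> T u \in A (- (eps * nu)) (- nu))) /\
  (* (iii) *)
    (~~ odd k ->
      (forall u, u \in A (- nu) (- nu) -> T u \in A nu nu :|: [set 1; (- eps)%:~R])
      /\ (forall u, u \in A nu (- nu) -> T u \in A (- nu) nu :|: [set 1; eps%:~R])) /\
  (* (iv) *)
    (((q.-1)./2 %| k)%N ->
      (forall u : F, T u \in A 1 (-1) :|: A (-1) 1 :|: [set 1; -1])
      /\ A 1 (-1) :|: A (-1) 1 = [set a : F | ~~ is_square (a ^+ 2 - 1)]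
      /\ (~~ odd k -> forall u : F, T u \in A (- nu) nu :|: [set 1; -1])) /\
  (* (v) *)
    (((q.+1)./2 %| k)%N ->
      (forall u : F, T u \in A 1 1 :|: A (-1) (-1) :|: [set 1; -1])
      /\ A 1 1 :|: A (-1) (-1) :|: [set 1; -1] = [set a : F | is_square (a ^+ 2 - 1)]
      /\ (~~ odd k -> forall u : F, T u \in A nu nu :|: [set 1; -1])) /\
  (* (vi) *)
    (forall e1 e2 : int, e1 \in [:: 1; -1] -> e2 \in [:: 1; -1] ->
      A e1 e2 != set0 ->
      (permutes T (A e1 e2) <-> gcdn k (dsign q (nu * e1) (nu * e2)) = 1%N)).
Proof.
move=> q eps nu T A.
have [E [f hE]] := ext_exists hodd.
have hnu : nu \in [:: -1; 0; 1] := legendre_in _.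
have heps : eps \in [:: -1; 0; 1] := legendre_in _.
have L1 : (1 : int) \in [:: -1; 0; 1] by [].
have Lm1 : (-1 : int) \in [:: -1; 0; 1] by [].
have hAE : forall e1 e2, e1 \in [:: -1; 0; 1] -> e2 \in [:: -1; 0; 1] ->
    A e1 e2 = AF e1%:~R e2%:~R.
  by move=> e1 e2 h1 h2; rewrite /A AsetE.
have hN : (nu%:~R : F) = 2 ^+ hh F := legendreE hodd 2.
have hEps : (eps%:~R : F) = (-1) ^+ hh F := legendreE hodd (-1).
have hnuN := memL_N hnu.
have hen := memL_M heps hnu.
have henN := memL_N hen.
have [c0 c1] := cheb_pm k.
rewrite /T.
split; first exact: c0.
split; first exact: c1.
split.
  rewrite !hAE // !rmorphN /= hN hEps; exact: (part_i f hodd hE k).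
split.
  move=> ko; rewrite !hAE // !rmorphN !rmorphM /= hN hEps; exact: (part_ii f hodd hE ko).
split.
  move=> ke; rewrite !hAE // !rmorphN /= hN hEps; exact: (part_iii f hodd hE ke).
split.
  rewrite /q qm1 // doubleK => hd.
  rewrite !hAE // !rmorphN rmorph1 /= hN.
  split; first by move=> u; case: (part_iv f hodd hE u hd).
  split; first exact: set_iv.
  by move=> ke u; case: (part_iv f hodd hE u hd) => _; apply.
split.
  rewrite /q qp1 // doubleK => hd.
  rewrite !hAE // !rmorphN rmorph1 /= hN.
  split; first by move=> u; case: (part_v f hodd hE u hd).
  split; first exact: set_v.
  by move=> ke u; case: (part_v f hodd hE u hd) => _; apply.
move=> e1 e2 he1 he2.
have h1 := memL_pm he1; have h2 := memL_pm he2.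
rewrite !hAE // => hne.
have sgE : forall e : int, e \in [:: 1; -1] -> sg (e%:~R : F).
  by move=> e; rewrite !inE => /orP [] /eqP ->; rewrite /sg ?rmorphN /= ?rmorph1 eqxx ?orbT.
rewrite (vi_main f hodd hE (sgE _ he1) (sgE _ he2) hk hne).
suff -> : dsign q (nu * e1) (nu * e2) =
  (if sig (e1%:~R : F) e2%:~R == 1 then mm (e1%:~R : F) e2%:~R else (mm (e1%:~R : F) e2%:~R).*2) by [].
have hnu' : nu = 1 \/ nu = -1.
  by rewrite /nu /legendre (negbTE (two_neq0 hodd)); case: ifP; [left|right].
have m1 : ((1 : F) == -1) = false by rewrite eq_sym (negbTE (m1_neq1 hodd)).
have m1' : ((-1 : F) == 1) = false by rewrite (negbTE (m1_neq1 hodd)).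
rewrite /sig /mm -hN /dsign /q.
move: he1 he2; rewrite !inE => /orP [] /eqP -> /orP [] /eqP ->; case: hnu' => ->;
  rewrite ?rmorphN /= ?rmorph1 ?eqxx ?m1 ?m1' /=.
all: rewrite ?mul1r ?mulr1 ?mulN1r ?mulrN1 ?opprK ?eqxx ?m1' /=.
all: rewrite ?qm1 ?qp1 ?doubleK //.
all: by rewrite qE //= doubleK.
Qed.
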